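(* Let $A\in\mathbb{R}^{m\times n}$ with $m>n$ be a full-rank standardized matrix with no two distinct rows parallel, let $x\in\mathbb{R}^n$, and let $b=Ax$. Let $x_{k-1}$ be the $(k-1)$-st iterate of the two-subspace Kaczmarz method, and let $x_k$ be the next iterate. Then, conditionally on $x_{k-1}$, $$\mathbb{E}\|x-x_k\|_2^2\le\left(1-\frac1R\right)^2\|x-x_{k-1}\|_2^2-\frac{1}{m^2-m}\sum_{r<s}C_{r,s}^2\left(\langle x-x_{k-1},a_r\rangle^2+\langle x-x_{k-1},a_s\rangle^2\right),$$ where $\mu_{r,s}=\langle a_r,a_s\rangle$ and $C_{r,s}=\frac{|\mu_{r,s}|-\mu_{r,s}^2}{\sqrt{1-\mu_{r,s}^2}}$.
   Context: $A\in\mathbb{R}^{m\times n}$ has rows $a_1,\dots,a_m$. It is called standardized if $\|a_i\|_2=1$ for all $i$. ''No two distinct rows parallel'' means $|\langle a_r,a_s\rangle|<1$ for all $r\ne s$. Two-subspace Kaczmarz method for $(A,b)$, $b\in\mathbb{R}^m$: start from $x_0\in\mathbb{R}^n$. For $k=1,2,\dots$, choose an ordered pair $(r,s)$ of distinct indices in $\{1,\dots,m\}$ uniformly at random among the $m^2-m$ such pairs, independently of all previous choices. Then set $\mu_k=\langle a_r,a_s\rangle$, $y_k=x_{k-1}+(b_s-\langle x_{k-1},a_s\rangle)a_s$, $v_k=\frac{a_r-\mu_k a_s}{\sqrt{1-\mu_k^2}}$, $\beta_k=\frac{b_r-b_s\mu_k}{\sqrt{1-\mu_k^2}}$, and $x_k=y_k+(\beta_k-\langle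 y_k,v_k\rangle)v_k$. Scaled condition number: $R=\|A\|_F^2\|A^{-1}\|^2$, where $\|A^{-1}\|=\inf\{M: M\|Az\|_2\ge\|z\|_2\ \text{for all } z\}$, i.e. the reciprocal of the smallest singular value of $A$. *)

(* Defs.v *)
(* R is an arbitrary real closed field (rcfType), which
   contains the reals' algebraic content and has Num.sqrt. *)
From HB Require Import structures.
From mathcomp Require Import all_boot all_order all_algebra.
Set Implicit Arguments. Unset Strict Implicit. Unset Printing Implicit Defensive.
Import Order.TTheory GRing.Theory Num.Theory.
Local Open Scope ring_scope.

Definition dot (R : rcfType) (n : nat) (u v : 'cV[R]_n) : R :=
  \sum_(i < n) u i 0 * v i 0.

Definition norm2 (R : rcfType) (n : nat) (u : 'cV[R]_n) : R :=
  Num.sqrt (dot u u).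

Definition arow (R : rcfType) (m n : nat) (A : 'M[R]_(m, n)) (i : 'I_m)
  : 'cV[R]_n := (row i A)^T.

Definition standardized (R : rcfType) (m n : nat) (A : 'M[R]_(m, n)) : Prop :=
  forall i : 'I_m, norm2 (arow A i) = 1.

Definition no_parallel_rows (R : rcfType) (m n : nat) (A : 'M[R]_(m, n))
  : Prop :=
  forall r s : 'I_m, r != s -> `| dot (arow A r) (arow A s) | < 1.

Definition frob2 (R : rcfType) (m n : nat) (A : 'M[R]_(m, n)) : R :=
  \sum_(i < m) \sum_(j < n) A i j ^+ 2.

(* M is ||A^{-1}|| = inf { M : M ||Az||_2 >= ||z||_2 for all z }. *)
Definition is_inv_norm (R : rcfType) (m n : nat) (A : 'M[R]_(m, n)) (M : R)
  : Prop :=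
  (forall z : 'cV[R]_n, norm2 z <= M * norm2 (A *m z)) /\
  (forall M' : R, (forall z : 'cV[R]_n, norm2 z <= M' * norm2 (A *m z)) ->
     M <= M').

Definition tsk_step (R : rcfType) (m n : nat) (A : 'M[R]_(m, n))
  (b : 'cV[R]_m) (xprev : 'cV[R]_n) (r s : 'I_m) : 'cV[R]_n :=
  let mu := dot (arow A r) (arow A s) in
  let y := xprev + (b s 0 - dot xprev (arow A s)) *: arow A s in
  let v := (Num.sqrt (1 - mu ^+ 2))^-1 *: (arow A r - mu *: arow A s) in
  let beta := (b r 0 - b s 0 * mu) / Num.sqrt (1 - mu ^+ 2) in
  y + (beta - dot y v) *: v.

Definition Ccoef (R : rcfType) (m n : nat) (A : 'M[R]_(m, n)) (r s : 'I_m)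
  : R :=
  let mu := dot (arow A r) (arow A s) in
  (`|mu| - mu ^+ 2) / Num.sqrt (1 - mu ^+ 2).

(* Main.v *)
Require Import Defs.
From HB Require Import structures.
From mathcomp Require Import all_boot all_order all_algebra.
From mathcomp Require Import ring lra.
Import Order.TTheory GRing.Theory Num.Theory.
Set Implicit Arguments. Unset Strict Implicit. Unset Printing Implicit Defensive.
Local Open Scope ring_scope.

Section Dot.
Variable R : rcfType.
Variable n : nat.
Implicit Types u v w : 'cV[R]_n.

Lemma dotC u v : dot u v = dot v u.
Proof. by rewrite /dot; apply eq_bigr => i _; rewrite mulrC. Qed.
Lemma dotDl u v w : dot (u + v) w = dot u w + dot v w.
Proof. by rewrite /dot -big_split; apply eq_bigr => i _; rewrite !mxE mulrDl. Qed.
Lemma dotZl c u w : dot (c *: u) w = c * dot u w.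
Proof. by rewrite /dot mulr_sumr; apply eq_bigr => i _; rewrite !mxE mulrA. Qed.
Lemma dotNl u w : dot (- u) w = - dot u w.
Proof. by rewrite /dot -sumrN; apply eq_bigr => i _; rewrite !mxE mulNr. Qed.
Lemma dotBl u v w : dot (u - v) w = dot u w - dot v w.
Proof. by rewrite dotDl dotNl. Qed.
Lemma dotDr u v w : dot w (u + v) = dot w u + dot w v.
Proof. by rewrite dotC dotDl !(dotC w). Qed.
Lemma dotZr c u w : dot w (c *: u) = c * dot w u.
Proof. by rewrite dotC dotZl dotC. Qed.
Lemma dotBr u v w : dot w (u - v) = dot w u - dot w v.
Proof. by rewrite dotC dotBl !(dotC w). Qed.
Lemma dot_ge0 u : 0 <= dot u u.
Proof. by apply: sumr_ge0 => i _; rewrite -expr2 sqr_ge0. Qed.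
Lemma norm2_sq u : norm2 u ^+ 2 = dot u u.
Proof. by rewrite /norm2 sqr_sqrtr // dot_ge0. Qed.
Lemma norm2_ge0 u : 0 <= norm2 u.
Proof. exact: sqrtr_ge0. Qed.
End Dot.

Lemma mulmx_dot (R : rcfType) m n (A : 'M[R]_(m, n)) z i :
  (A *m z) i 0 = dot z (arow A i).
Proof. by rewrite mxE /dot; apply eq_bigr => j _; rewrite !mxE mulrC. Qed.

Lemma dot_Az (R : rcfType) m n (A : 'M[R]_(m, n)) z :
  dot (A *m z) (A *m z) = \sum_(i < m) dot z (arow A i) ^+ 2.
Proof. by rewrite /dot; apply eq_bigr => i _; rewrite mulmx_dot expr2. Qed.

Lemma sum_pair (R : rcfType) m (F : 'I_m -> 'I_m -> R) :
  \sum_(r < m) \sum_(s < m | s != r) F r s =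
  \sum_(r < m) \sum_(s < m | (r < s)%N) (F r s + F s r).
Proof.
have -> : \sum_(r < m) \sum_(s < m | s != r) F r s =
   \sum_(r < m) \sum_(s < m | (r < s)%N) F r s +
   \sum_(r < m) \sum_(s < m | (s < r)%N) F r s.
  rewrite -big_split; apply eq_bigr => r _.
  rewrite (bigID (fun s : 'I_m => (r < s)%N)) /=; congr (_ + _).
    apply: eq_bigl => s; rewrite -(inj_eq val_inj) /=; case: (ltngtP r s) => //.
  apply: eq_bigl => s; rewrite -(inj_eq val_inj) /=; case: (ltngtP r s) => //.
under [in RHS]eq_bigr do rewrite big_split. rewrite [in RHS]big_split /=; congr (_ + _).
rewrite (eq_bigr (fun r : 'I_m => \sum_(s < m) (if (s < r)%N then F r s else 0))); last first.
  by move=> r _; rewrite big_mkcond.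
rewrite exchange_big /=; apply: eq_bigr => r _.
by rewrite [RHS]big_mkcond.
Qed.

Lemma proj_id (R : rcfType) n (d v : 'cV[R]_n) : dot v v = 1 ->
  dot (d - dot d v *: v) (d - dot d v *: v) = dot d d - dot d v ^+ 2.
Proof.
move=> hv; rewrite !dotBl !dotBr !dotZl !dotZr (dotC v d) hv; ring.
Qed.

Lemma step_id (R : rcfType) m n (A : 'M[R]_(m, n)) x xprev r s :
  dot (arow A r) (arow A r) = 1 -> dot (arow A s) (arow A s) = 1 ->
  `|dot (arow A r) (arow A s)| < 1 ->
  norm2 (x - tsk_step A (A *m x) xprev r s) ^+ 2 =
  dot (x - xprev) (x - xprev) - dot (x - xprev) (arow A s) ^+ 2
  - (dot (x - xprev) (arow A r) - dot (arow A r) (arow A s) * dot (x - xprev) (arow A s)) ^+ 2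
    / (1 - dot (arow A r) (arow A s) ^+ 2).
Proof.
move=> hr hs hmu.
rewrite norm2_sq /tsk_step.
set u := arow A r; set w := arow A s; set mu := dot u w.
set e := x - xprev.
have hmu2 : 0 < 1 - mu ^+ 2.
  by rewrite subr_gt0 -real_normK ?num_real // expr_lt1 ?normr_ge0.
set q := Num.sqrt (1 - mu ^+ 2).
have hq2 : q ^+ 2 = 1 - mu ^+ 2 by rewrite sqr_sqrtr // ltW.
have hq0 : q != 0 by rewrite sqrtr_eq0 -ltNge.
set iq := q^-1.
have hiq : iq * iq * (1 - mu ^+ 2) = 1.
  by rewrite -hq2 /iq; field.
set y := xprev + _ *: w.
set v := iq *: (u - mu *: w).
have hbr : (A *m x) r 0 = dot x u by rewrite mulmx_dot.
have hbs : (A *m x) s 0 = dot x w by rewrite mulmx_dot.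
have hwu : dot w u = mu by rewrite dotC.
have hvv : dot v v = 1.
  rewrite -hiq /v !dotZl !dotZr !dotBl !dotBr !dotZl !dotZr hr hs hwu -/mu. clearbody iq mu. ring.
have hy : y = xprev + dot e w *: w by rewrite /y hbs /e dotBl.
have hd : x - y = e - dot e w *: w by rewrite hy opprD addrA.
have hbeta : ((A *m x) r 0 - (A *m x) s 0 * mu) / q = dot x v.
  by rewrite hbr hbs /v dotZr dotBr dotZr -/iq; ring.
rewrite hbeta.
have -> : x - (y + (dot x v - dot y v) *: v) = (x - y) - dot (x - y) v *: v.
  by rewrite dotBl opprD addrA.
rewrite proj_id // hd.
have -> : dot (e - dot e w *: w) v = iq * (dot e u - mu * dot e w).
  rewrite /v dotZr !dotBr !dotBl !dotZr !dotZl hs (dotC w u) -/mu; ring.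
rewrite !dotBl !dotBr !dotZl !dotZr hs (dotC w x) (dotC w xprev) (dotC xprev x).
have h1 : 1 - mu ^+ 2 != 0 by rewrite gt_eqF.
have hinv : iq * iq = (1 - mu ^+ 2)^-1.
  by apply: (mulIf h1); rewrite hiq mulVf.
rewrite -hinv; clearbody iq mu; ring.
Qed.

Lemma key_ineq (R : realFieldType) (mu p q : R) :
  (`|mu| - mu ^+ 2) ^+ 2 * (p ^+ 2 + q ^+ 2) <=
  mu ^+ 2 * ((p - mu * q) ^+ 2 + (q - mu * p) ^+ 2).
Proof.
have [h|h] := leP 0 mu.
  rewrite ger0_norm //.
  have := mulr_ge0 (sqr_ge0 mu) (mulr_ge0 h (sqr_ge0 (p - q))); lra.
rewrite ltr0_norm //.
have h' : 0 <= - mu by lra.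
have := mulr_ge0 (sqr_ge0 mu) (mulr_ge0 h' (sqr_ge0 (p + q))); lra.
Qed.

Lemma sum_swap (R : rcfType) m (F : 'I_m -> 'I_m -> R) :
  \sum_(r < m) \sum_(s < m | s != r) F r s =
  \sum_(r < m) \sum_(s < m | s != r) F s r.
Proof.
rewrite !sum_pair; apply: eq_bigr => r _; apply: eq_bigr => s _; exact: addrC.
Qed.

Lemma sum_const_neq (R : rcfType) m (r : 'I_m) (c : R) :
  \sum_(s < m | s != r) c = (m%:R - 1) * c.
Proof.
have h : \sum_(s < m) c = c + \sum_(s < m | s != r) c by rewrite (bigD1 r).
rewrite sumr_const card_ord /= in h.
have -> : \sum_(s < m | s != r) c = c *+ m - c by rewrite h addrC addKr.
by rewrite mulrBl mul1r mulr_natl.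
Qed.
Theorem lemma2 (R : rcfType) (m n : nat) (A : 'M[R]_(m, n))
  (x xprev : 'cV[R]_n) (Minv : R) :
  (n < m)%N ->
  \rank A = n ->
  standardized A ->
  no_parallel_rows A ->
  is_inv_norm A Minv ->
  let b := A *m x in
  let Rc := frob2 A * Minv ^+ 2 in
  ((m ^ 2 - m)%N%:R)^-1 *
    \sum_(r < m) \sum_(s < m | s != r) norm2 (x - tsk_step A (A *m x) xprev r s) ^+ 2
  <= (1 - Rc^-1) ^+ 2 * norm2 (x - xprev) ^+ 2
     - ((m ^ 2 - m)%N%:R)^-1 *
       \sum_(r < m) \sum_(s < m | (r < s)%N)
          Ccoef A r s ^+ 2 *
          (dot (x - xprev) (arow A r) ^+ 2 + dot (x - xprev) (arow A s) ^+ 2).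
Proof.
move=> hnm _ hst hnp [hM1 _]; cbv zeta.
have hrow i : dot (arow A i) (arow A i) = 1 by rewrite -norm2_sq hst expr1n.
have hm0 : (0 < m)%N by apply: leq_ltn_trans hnm.
have hn0 : (0 < n)%N.
  case: n A x xprev hnm hrow {hM1 hst hnp} => // A x xprev _ hrow.
  by have := hrow (Ordinal hm0); rewrite /dot big_ord0 => /eqP; rewrite eq_sym oner_eq0.
have hm2 : (1 < m)%N by apply: leq_trans hnm.
set mm : R := m%:R.
have hmm2 : 2 <= mm by rewrite /mm (ler_nat R 2 m).
have hfrob : frob2 A = mm.
  rewrite /frob2 (eq_bigr (fun _ => 1)); last first.
    move=> i _; rewrite -(hrow i) /dot; apply: eq_bigr => j _; rewrite !mxE expr2 //.
  by rewrite sumr_const card_ord.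
set K := Minv ^+ 2.
have sqb z : dot z z <= K * \sum_(i < m) dot z (arow A i) ^+ 2.
  have h1 := hM1 z; have h0 := norm2_ge0 z.
  have : norm2 z ^+ 2 <= (Minv * norm2 (A *m z)) ^+ 2 by nra.
  by rewrite exprMn !norm2_sq dot_Az.
have hK : 0 <= K by rewrite /K sqr_ge0.
have hmK : 1 <= mm * K.
  pose j0 : 'I_n := Ordinal hn0.
  have := sqb (delta_mx j0 0).
  have -> : dot (delta_mx j0 0) (delta_mx j0 0) = 1 :> R.
    rewrite /dot (bigD1 j0) //= big1 ?addr0; first by rewrite !mxE eqxx mulr1.
    by move=> j hj; rewrite !mxE (negbTE hj) mulr0.
  have hle : \sum_(i < m) dot (delta_mx j0 0) (arow A i) ^+ 2 <= mm.
    rewrite -hfrob /frob2; apply: ler_sum => i _.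
    have -> : dot (delta_mx j0 0) (arow A i) = A i j0.
      rewrite /dot (bigD1 j0) //= big1 ?addr0; first by rewrite !mxE eqxx mul1r.
      by move=> j hj; rewrite !mxE (negbTE hj) mul0r.
    rewrite (bigD1 j0) //= lerDl; apply: sumr_ge0 => j _; exact: sqr_ge0.
  move=> h; apply: le_trans h _; nra.
have hK0 : 0 < K.
  rewrite lt_def hK andbT; apply/eqP => hK0; move: hmK; rewrite hK0 mulr0; lra.
set t := (mm * K)^-1.
have ht : t * (mm * K) = 1 by rewrite /t mulVf // gt_eqF //; nra.
have ht0 : 0 < t by rewrite /t invr_gt0; nra.
have ht1 : t <= 1 by rewrite /t invf_le1 //; lra.
have hRc : (frob2 A * Minv ^+ 2)^-1 = t by rewrite hfrob.
rewrite hRc norm2_sq.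
set e := x - xprev.
set E := dot e e.
pose al i := dot e (arow A i).
pose mu r s := dot (arow A r) (arow A s).
pose g r s := (al r - mu r s * al s) ^+ 2.
pose h r s := g r s * mu r s ^+ 2 / (1 - mu r s ^+ 2).
have hmusym r s : mu s r = mu r s by rewrite /mu dotC.
have hmu1 r s : r != s -> 0 < 1 - mu r s ^+ 2.
  move=> hrs; have := hnp r s hrs.
  by rewrite -/(mu r s) subr_gt0 -real_normK ?num_real // => hh; rewrite expr_lt1 ?normr_ge0.
have F1 r s : s != r -> norm2 (x - tsk_step A (A *m x) xprev r s) ^+ 2 =
    (E - al s ^+ 2 - g r s) - h r s.
  move=> hsr; have hrs : r != s by rewrite eq_sym.
  rewrite step_id //; last exact: hnp.
  rewrite -/e -/E -/(al r) -/(al s) -/(mu r s) /h /g.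
  have := hmu1 r s hrs; move: (mu r s) => M hM.
  field; lra.
have e1_row (u a c : 'cV[R]_n) : dot (u - dot u a *: a) c = dot u c - dot u a * dot a c.
  by rewrite dotBl dotZl.
have hE1 r : 0 <= E - al r ^+ 2 /\ E - al r ^+ 2 <= K * \sum_(s < m | s != r) g s r.
  have hd := proj_id e (hrow r).
  rewrite -/E -/(al r) in hd.
  split; first by rewrite -hd dot_ge0.
  rewrite -hd; apply: le_trans (sqb _) _.
  rewrite [X in K * X <= _](bigD1 r) //= /al e1_row hrow mulr1 subrr expr0n /= add0r.
  rewrite le_eqVlt; apply/orP; left; apply/eqP; congr (_ * _); apply: eq_bigr => s _.
  by rewrite e1_row /g /al hmusym /mu mulrC.
have hF3 : E <= K * \sum_(i < m) al i ^+ 2 by exact: sqb.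
have hF4 r s : r != s -> Ccoef A r s ^+ 2 * (al r ^+ 2 + al s ^+ 2) <= h r s + h s r.
  move=> hrs; have hD := hmu1 r s hrs.
  rewrite /Ccoef -/(mu r s) expr_div_n sqr_sqrtr ?(ltW hD) // /h /g (hmusym r s).
  have := key_ineq (mu r s) (al r) (al s).
  move: (mu r s) (al r) (al s) hD => M p q hD hk.
  rewrite -subr_ge0.
  have -> : (p - M * q) ^+ 2 * M ^+ 2 / (1 - M ^+ 2) + (q - M * p) ^+ 2 * M ^+ 2 / (1 - M ^+ 2) -
     (`|M| - M ^+ 2) ^+ 2 / (1 - M ^+ 2) * (p ^+ 2 + q ^+ 2) =
     (M ^+ 2 * ((p - M * q) ^+ 2 + (q - M * p) ^+ 2) - (`|M| - M ^+ 2) ^+ 2 * (p ^+ 2 + q ^+ 2)) / (1 - M ^+ 2).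
    by field; rewrite gt_eqF.
  by apply: divr_ge0; [rewrite subr_ge0 | exact: ltW].
rewrite (eq_bigr (fun r : 'I_m => \sum_(s < m | s != r) ((E - al s ^+ 2 - g r s) - h r s))); last first.
  by move=> r _; apply: eq_bigr => s hs; rewrite F1.
under eq_bigr do rewrite sumrB.
rewrite sumrB.
set T1 := \sum_(r < m) \sum_(s < m | s != r) (E - al s ^+ 2 - g r s).
set T2 := \sum_(r < m) \sum_(s < m | s != r) h r s.
set T3 := \sum_(r < m) \sum_(s < m | (r < s)%N) _.
have hT23 : T3 <= T2.
  rewrite /T2 sum_pair; apply: ler_sum => r _; apply: ler_sum => s hrs.
  by apply: hF4; rewrite -(inj_eq val_inj) /= ltn_eqF.
have hT1 : T1 <= mm * (mm - 1) * ((1 - t) ^+ 2 * E).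
  rewrite /T1 sum_swap.
  apply: (le_trans (y := \sum_(r < m) (mm - 1) * (1 - t) * (E - al r ^+ 2))).
    apply: ler_sum => r _.
    rewrite sumrB sum_const_neq.
    have [h0 h1] := hE1 r.
    set G := \sum_(s < m | s != r) g s r in h1 *.
    set E1 := E - al r ^+ 2 in h0 h1 *.
    have hG : 0 <= G by apply: sumr_ge0 => s _; exact: sqr_ge0.
    have htK : t * K * mm = 1 by rewrite -ht; ring.
    have hm1 : 0 <= (mm - 1) * t by apply: mulr_ge0; lra.
    have h2 : (mm - 1) * t * E1 <= (mm - 1) * t * (K * G) by exact: ler_wpM2l.
    have h3 : 0 <= t * K * G by apply: mulr_ge0 => //; apply: mulr_ge0; lra.
    have h4 : (mm - 1) * t * (K * G) = G - t * K * G.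
      by transitivity (t * K * mm * G - t * K * G); [ring | rewrite htK mul1r].
    nra.
  rewrite -mulr_sumr sumrB sumr_const card_ord -/mm.
  have hS : mm * t * E <= \sum_(i < m) al i ^+ 2.
    have h5 : mm * t * E <= mm * t * (K * \sum_(i < m) al i ^+ 2).
      by apply: ler_wpM2l => //; apply: mulr_ge0; lra.
    apply: le_trans h5 _; rewrite le_eqVlt; apply/orP; left; apply/eqP.
    by transitivity (t * (mm * K) * \sum_(i < m) al i ^+ 2); [ring | rewrite ht mul1r].
  have h6 : 0 <= (mm - 1) * (1 - t) by apply: mulr_ge0; lra.
  have h7 : (mm - 1) * (1 - t) * (E *+ m - \sum_(i < m) al i ^+ 2) <=
            (mm - 1) * (1 - t) * (E *+ m - mm * t * E).
    by apply: ler_wpM2l => //; lra.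
  apply: le_trans h7 _; rewrite -mulr_natl -/mm le_eqVlt; apply/orP; left; apply/eqP; ring.
have hN : (m ^ 2 - m)%N%:R = mm * (mm - 1) :> R.
  rewrite natrB; last exact: leq_pmull.
  by rewrite natrX -/mm; ring.
rewrite hN.
have hN0 : 0 < mm * (mm - 1) by apply: mulr_gt0; lra.
rewrite mulrBr; apply: lerB; last first.
  by apply: ler_wpM2l => //; rewrite invr_ge0 ltW.
apply: le_trans (ler_wpM2l _ hT1) _; first by rewrite invr_ge0 ltW.
by rewrite mulKf ?gt_eqF.
Qed.
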